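(* Let $\Delta^{(w)}$ be a dyadic cube of rank $w$, let $\sum_{\mathbf n\in\mathbb N_0^d}a_{\mathbf n}W_{\mathbf n}$ be a $d$-fold Walsh series and $\tau$ the quasimeasure generated by it. If $\tau(\Delta)=0$ for every dyadic cube $\Delta\subset\Delta^{(w)}$, then $S_{2^w\mathbf M}(\mathbf g)=0$ for all $\mathbf g\in\Delta^{(w)}$ and all $\mathbf M\in\mathbb N^d$.
   Context: Fix $d\ge2$. $\mathbb G$ is the dyadic group: sequences $g=(g_k)_{k\ge0}$, $g_k\in\{0,1\}$, coordinatewise addition mod 2, product topology; $\mathbb G^d$ its $d$-th power. For $n\in\mathbb N_0$, $n=\sum_kn_k2^k$, $n_k\in\{0,1\}$. Dyadic interval of rank $k$: $\Delta^{(k)}_m=\{g: g_t=m_{k-1-t},\ 0\le t<k\}$, $0\le m<2^k$; dyadic cube of rank $k$: $\Delta^{(k)}_{\mathbf m}=\prod_l\Delta^{(k)}_{m^l}$. Vector order coordinatewise, $\mathbf 1=(1,\dots,1)$. Walsh functions $W_n(g)=\prod_k(-1)^{g_kn_k}$, $W_{\mathbf n}(\mathbf g)=\prod_lW_{n^l}(g^l)$. Partial sums $S_{\mathbf N}(\mathbf g)=\sum_{\mathbf n<\mathbf N}a_{\mathbf n}W_{\mathbf n}(\mathbf g)$. A quasimeasure is a function $\tau$ on dyadic cubes with $\tau(\Delta^{(k)}_{\mathbf m})=\sum_{\boldsymbol\sigma\in\{0,1\}^d}\tau(\Delta^{(k+1)}_{2\mathbf m+\boldsymbol\sigma})$; the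 quasimeasure generated by the series is $\tau(\Delta^{(k)})=2^{-kd}S_{2^k\mathbf 1}(\mathbf g)$ for $\mathbf g\in\Delta^{(k)}$ ($S_{2^k\mathbf 1}$ is constant on each dyadic cube of rank $k$). *)

(* Defs.v *)
From mathcomp Require Import all_boot all_order all_algebra.
Set Implicit Arguments. Unset Strict Implicit. Unset Printing Implicit Defensive.
Import Order.TTheory GRing.Theory Num.Theory.
Local Open Scope ring_scope.

Definition dyadic := nat -> bool.
Definition dyadicd (d : nat) := 'I_d -> dyadic.

Definition bit (n k : nat) : bool := odd (n %/ 2 ^ k).

(* W_n(g) = prod_k (-1)^{g_k n_k}; only k < n can have n_k = 1. *)
Definition walsh (R : nzRingType) (n : nat) (g : dyadic) : R :=
  \prod_(k < n) (if g k && bit n k then -1 else 1).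

Definition walshd (R : nzRingType) (d : nat) (n : 'I_d -> nat) (g : dyadicd d) : R :=
  \prod_(l < d) walsh R (n l) (g l).

Definition psum (R : nzRingType) (d : nat) (a : ('I_d -> nat) -> R)
    (N : 'I_d -> nat) (g : dyadicd d) : R :=
  \sum_(n : {ffun 'I_d -> 'I_(\max_(l < d) N l)} | [forall l, (n l < N l)%N])
     a (fun l => nat_of_ord (n l)) * walshd R (fun l => nat_of_ord (n l)) g.

Definition in_cube (d : nat) (k : nat) (m : 'I_d -> nat) (g : dyadicd d) : Prop :=
  forall (l : 'I_d) (t : nat), (t < k)%N -> g l t = bit (m l) (k - 1 - t).

Definition cube_point (d : nat) (k : nat) (m : 'I_d -> nat) : dyadicd d :=
  fun l t => if (t < k)%N then bit (m l) (k - 1 - t) else false.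

(* The quasimeasure generated by the series:
   tau(Delta^(k)_m) = 2^{-kd} S_{2^k 1}(g), g in Delta^(k)_m. *)
Definition tau (R : fieldType) (d : nat) (a : ('I_d -> nat) -> R)
    (k : nat) (m : 'I_d -> nat) : R :=
  ((2 ^ (k * d))%:R)^-1 * psum a (fun _ => 2 ^ k)%N (cube_point k m).

(* Main.v *)
Require Import Defs.
From mathcomp Require Import all_boot all_order all_algebra zify ring.
From Stdlib Require Import FunctionalExtensionality.
Set Implicit Arguments. Unset Strict Implicit. Unset Printing Implicit Defensive.
Import Order.TTheory GRing.Theory Num.Theory.
Local Open Scope ring_scope.

Lemma bit_small n t : (n < 2 ^ t)%N -> bit n t = false.
Proof. by move=> h; rewrite /bit divn_small. Qed.

Lemma prod_ext (R : nzRingType) (F : nat -> R) n m :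
  (forall t, (n <= t)%N -> F t = 1) -> (n <= m)%N ->
  \prod_(t < n) F t = \prod_(t < m) F t.
Proof.
move=> h1 hnm; rewrite (big_ord_widen m F hnm) big_mkcond /=.
apply: eq_bigr => i _; case: ifP => // /negbT; rewrite -leqNgt => hi.
by rewrite h1.
Qed.

Lemma walsh_T (R : nzRingType) n x T : (n < 2 ^ T)%N ->
  walsh R n x = \prod_(t < T) (if x t && bit n t then -1 else 1).
Proof.
move=> hT; rewrite /walsh.
have h1 : forall t, (n <= t)%N -> (if x t && bit n t then -1 else 1) = 1 :> R.
  move=> t ht; rewrite bit_small ?andbF //.
  by apply: leq_trans (ltn_expl n (isT : (1 < 2)%N)) _; rewrite leq_exp2l.
have h2 : forall t, (T <= t)%N -> (if x t && bit n t then -1 else 1) = 1 :> R.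
  move=> t ht; rewrite bit_small ?andbF //.
  by apply: leq_trans hT _; rewrite leq_exp2l.
rewrite (prod_ext h1 (leq_maxl n T)).
by rewrite (prod_ext h2 (leq_maxr n T)).
Qed.

Lemma bit_add_low c r w t : (r < 2 ^ w)%N -> (t < w)%N ->
  bit (2 ^ w * c + r) t = bit r t.
Proof.
move=> hr ht; rewrite /bit divnDl; last first.
  by apply: dvdn_mulr; rewrite dvdn_exp2l // ltnW.
have -> : (2 ^ w * c %/ 2 ^ t = 2 * (2 ^ (w - t.+1) * c))%N.
  have e : (2 ^ w * c = 2 ^ t * (2 * (2 ^ (w - t.+1) * c)))%N.
    by rewrite mulnA -expnSr mulnA -expnD subnKC.
  by rewrite e mulKn ?expn_gt0.
by rewrite oddD oddM.

Qed.

Lemma bit_add_high c r w t : (r < 2 ^ w)%N -> (w <= t)%N ->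
  bit (2 ^ w * c + r) t = bit (2 ^ w * c) t.
Proof.
move=> hr ht; rewrite /bit -(subnKC ht) expnD !divnMA.
rewrite mulKn ?expn_gt0 // [(2 ^ w * c)%N]mulnC divnMDl ?expn_gt0 // (divn_small hr) addn0.
by [].
Qed.

Lemma walsh_split (R : comNzRingType) c r w x : (r < 2 ^ w)%N ->
  walsh R (2 ^ w * c + r) x = walsh R (2 ^ w * c) x * walsh R r x.
Proof.
move=> hr.
have hc : (2 ^ w * c + r < 2 ^ (w + c))%N.
  apply: (@leq_trans (2 ^ w * c.+1)); first by rewrite mulnS addnC ltn_add2r.
  by rewrite expnD leq_mul2l ltn_expl // orbT.
have hc' : (2 ^ w * c < 2 ^ (w + c))%N by apply: leq_ltn_trans hc; rewrite leq_addr.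
have hr' : (r < 2 ^ (w + c))%N by apply: leq_trans hr _; rewrite leq_exp2l // leq_addr.
rewrite (walsh_T _ _ hc) (walsh_T _ _ hc') (walsh_T _ _ hr') !big_split_ord /=.
have e1 : \prod_(i < w) (if x i && bit (2 ^ w * c) i then -1 else 1) = 1 :> R.
  apply: big1 => i _; have := bit_add_low c (expn_gt0 2 w) (ltn_ord i).
  by rewrite addn0 /bit div0n /= => ->; rewrite andbF.
have e2 : \prod_(i < c) (if x (w + i)%N && bit r (w + i) then -1 else 1) = 1 :> R.
  apply: big1 => i _; rewrite bit_small ?andbF //; apply: leq_trans hr _.
  by rewrite leq_exp2l // leq_addr.
rewrite e1 e2 mul1r mulr1 mulrC; congr (_ * _); apply: eq_bigr => i _.
  by rewrite bit_add_high // leq_addr.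
by rewrite bit_add_low.
Qed.

Lemma walsh_pow2 (R : nzRingType) w x :
  walsh R (2 ^ w) x = if x w then -1 else 1.
Proof.
have hw : (2 ^ w < 2 ^ w.+1)%N by rewrite ltn_exp2l.
rewrite (walsh_T _ _ hw) big_ord_recr /=.
rewrite big1 ?mul1r.
  by rewrite /bit divnn expn_gt0 /= andbT.
move=> i _; have := bit_add_low 1 (expn_gt0 2 w) (ltn_ord i).
by rewrite addn0 muln1 /bit div0n /= => ->; rewrite andbF.
Qed.

Lemma walsh_sq (R : comNzRingType) n x : walsh R n x * walsh R n x = 1.
Proof.
rewrite /walsh -big_split /=; apply: big1 => i _.
by case: ifP => _; rewrite ?mulrNN mulr1.
Qed.

Lemma walsh_local (R : nzRingType) n x y T : (n < 2 ^ T)%N ->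
  (forall t, (t < T)%N -> x t = y t) -> walsh R n x = walsh R n y.
Proof.
move=> hn h; rewrite !(walsh_T _ _ hn); apply: eq_bigr => i _.
by rewrite h.
Qed.

Lemma E0 (R : comNzRingType) w x y t : (t < w)%N -> x t != y t ->
  \sum_(r < 2 ^ w) walsh R r x * walsh R r y = 0.
Proof.
elim: w => [//|w IH] ht hxy.
rewrite expnS mul2n -addnn big_split_ord /=.
rewrite [X in _ + X](eq_bigr (fun i : 'I_(2 ^ w) => (walsh R (2 ^ w) x * walsh R (2 ^ w) y)
   * (walsh R i x * walsh R i y))); last first.
  move=> i _; have e : (2 ^ w + i = 2 ^ w * 1 + i)%N by rewrite muln1.
  rewrite e !walsh_split // muln1.
  by rewrite mulrA -[_ * walsh R (2 ^ w) y]mulrA [walsh R i x * _]mulrC !mulrA.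
rewrite -mulr_sumr -[X in X + _]mul1r -mulrDl.
case: (ltnP t w) => htw.
  by rewrite IH // mulr0.
move: hxy; have -> : t = w by apply/eqP; rewrite eqn_leq htw -ltnS ht.
rewrite !walsh_pow2.
by case: (x w); case: (y w) => //= _; rewrite ?mulrN ?mulNr ?mulr1 ?opprK ?subrr ?addrN ?mul0r.
Qed.

Lemma E1 (R : comNzRingType) w x y t c : (t < w)%N -> x t != y t ->
  \sum_(j < 2 ^ w * c) walsh R j x * walsh R j y = 0.
Proof.
move=> ht hxy; elim: c => [|c IH]; first by rewrite muln0 big_ord0.
rewrite mulnS addnC big_split_ord /= IH add0r.
rewrite (eq_bigr (fun i : 'I_(2 ^ w) => (walsh R (2 ^ w * c) x * walsh R (2 ^ w * c) y)
   * (walsh R i x * walsh R i y))); last first.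
  move=> i _; rewrite !walsh_split //.
  by rewrite mulrA -[_ * walsh R (2 ^ w * c) y]mulrA [walsh R i x * _]mulrC !mulrA.
by rewrite -mulr_sumr (E0 _ ht hxy) mulr0.
Qed.

Lemma E2 (R : comNzRingType) k x y : (forall t, (t < k)%N -> x t = y t) ->
  \sum_(r < 2 ^ k) walsh R r x * walsh R r y = (2 ^ k)%:R.
Proof.
move=> h; rewrite (eq_bigr (fun _ => 1)).
  by rewrite sumr_const card_ord.
by move=> i _; rewrite -(walsh_local _ (ltn_ord i) h) walsh_sq.
Qed.

Lemma bits_inj k n n' : (n < 2 ^ k)%N -> (n' < 2 ^ k)%N ->
  (forall t, (t < k)%N -> bit n t = bit n' t) -> n = n'.
Proof.
elim: k n n' => [|k IH] n n'.
  by rewrite expn0 !ltnS !leqn0 => /eqP -> /eqP ->.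
move=> hn hn' h.
have bS : forall m t, bit m t.+1 = bit m./2 t.
  by move=> m t; rewrite /bit expnS divnMA -divn2.
have e : n./2 = n'./2.
  apply: IH.
  - by rewrite ltn_half_double -mul2n -expnS.
  - by rewrite ltn_half_double -mul2n -expnS.
  by move=> t ht; rewrite -!bS h.
have o : odd n = odd n'.
  by have := h 0%N isT; rewrite /bit expn0 !divn1.
by rewrite -[n]odd_double_half -[n']odd_double_half e o.
Qed.

Definition pt (k m : nat) : dyadic := fun t => if (t < k)%N then bit m (k - 1 - t) else false.

Lemma walsh_sym (R : comNzRingType) k n m : (n < 2 ^ k)%N -> (m < 2 ^ k)%N ->
  walsh R n (pt k m) = walsh R m (pt k n).
Proof.
move=> hn hm; rewrite (walsh_T _ _ hn) (walsh_T _ _ hm).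
rewrite [LHS](reindex_inj (@rev_ord_inj k)) /=; apply: eq_bigr => i _.
rewrite /pt ltn_ord.
have -> : (k - i.+1 < k)%N by have := ltn_ord i; lia.
have -> : (k - 1 - (k - i.+1) = i)%N by have := ltn_ord i; lia.
have -> : (k - 1 - i = k - i.+1)%N by lia.
by rewrite andbC.
Qed.

Lemma orth1 (R : comNzRingType) k n n' : (n < 2 ^ k)%N -> (n' < 2 ^ k)%N ->
  \sum_(m < 2 ^ k) walsh R n (pt k m) * walsh R n' (pt k m) = (2 ^ k)%:R * (n == n')%:R.
Proof.
move=> hn hn'.
rewrite (eq_bigr (fun m : 'I_(2 ^ k) => walsh R m (pt k n) * walsh R m (pt k n'))); last first.
  by move=> m _; rewrite !(@walsh_sym _ k _ m).
case: eqP => [<-|ne].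
  by rewrite mulr1 E2.
case: (boolP [exists t : 'I_k, bit n t != bit n' t]) => [/existsP [t hb]|/existsPn h0].
  rewrite mulr0; apply: (@E0 _ k _ _ (k - 1 - t)); first by have := ltn_ord t; lia.
  rewrite /pt; have -> : (k - 1 - t < k)%N by have := ltn_ord t; lia.
  by have -> : (k - 1 - (k - 1 - t) = t)%N by have := ltn_ord t; lia.
exfalso; apply: ne; apply: (bits_inj hn hn') => t ht.
by have := h0 (Ordinal ht); rewrite negbK => /eqP.
Qed.

Definition vn d B (n : {ffun 'I_d -> 'I_B}) : 'I_d -> nat := fun l => nat_of_ord (n l).
Definition cpt d k B (m : {ffun 'I_d -> 'I_B}) : dyadicd d := fun l => pt k (m l).

Lemma prod_if (R : comNzRingType) d (c : 'I_d -> bool) (F : 'I_d -> R) :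
  \prod_l (if c l then F l else 0) = if [forall l, c l] then \prod_l F l else 0.
Proof.
case: (boolP [forall l, c l]) => [/forallP h|/forallPn [l hl]].
  by apply: eq_bigr => l _; rewrite h.
by rewrite (bigD1 l) //= (negbTE hl) mul0r.
Qed.

Lemma orthd (R : comNzRingType) d k (n n' : {ffun 'I_d -> 'I_(2 ^ k)}) :
  \sum_(m : {ffun 'I_d -> 'I_(2 ^ k)})
     walshd R (vn n) (cpt k m) * walshd R (vn n') (cpt k m)
  = ((2 ^ k)%:R) ^+ d * (n == n')%:R.
Proof.
pose G := fun l (j : 'I_(2 ^ k)) => walsh R (n l) (pt k j) * walsh R (n' l) (pt k j).
rewrite (eq_bigr (fun m : {ffun 'I_d -> 'I_(2 ^ k)} => \prod_l G l (m l))); last first.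
  by move=> m _; rewrite /walshd -big_split.
rewrite -(bigA_distr_bigA G) /G /=.
rewrite (eq_bigr (fun l => (2 ^ k)%:R * (n l == n' l)%:R)); last first.
  by move=> l _; rewrite orth1.
case: eqP => [<-|ne].
  rewrite mulr1 (eq_bigr (fun _ => (2 ^ k)%:R)); last by move=> l _; rewrite eqxx mulr1.
  by rewrite prodr_const card_ord.
have [l hl] : exists l, n l != n' l.
  case: (boolP [exists l, n l != n' l]) => [/existsP//|/existsPn h]; exfalso.
  by apply: ne; apply/ffunP => l; apply/eqP; have := h l; rewrite negbK.
by rewrite (bigD1 l) //= (negbTE hl) mulr0 mul0r mulr0.
Qed.

Lemma decomp (R : comNzRingType) d k (a : ('I_d -> nat) -> R)
  (P : pred {ffun 'I_d -> 'I_(2 ^ k)}) (g : dyadicd d) :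
  ((2 ^ k)%:R) ^+ d * \sum_(n | P n) a (vn n) * walshd R (vn n) g =
  \sum_(m : {ffun 'I_d -> 'I_(2 ^ k)})
    (\sum_(n' : {ffun 'I_d -> 'I_(2 ^ k)}) a (vn n') * walshd R (vn n') (cpt k m)) *
    (\sum_(n | P n) walshd R (vn n) (cpt k m) * walshd R (vn n) g).
Proof.
symmetry.
transitivity (\sum_(m : {ffun 'I_d -> 'I_(2 ^ k)}) \sum_(n' : {ffun 'I_d -> 'I_(2 ^ k)})
   \sum_(n | P n) a (vn n') * walshd R (vn n) g *
     (walshd R (vn n') (cpt k m) * walshd R (vn n) (cpt k m))).
  apply: eq_bigr => m _; rewrite mulr_suml; apply: eq_bigr => n' _.
  rewrite mulr_sumr; apply: eq_bigr => n _; ring.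
rewrite exchange_big /=.
transitivity (\sum_(n' : {ffun 'I_d -> 'I_(2 ^ k)}) \sum_(n | P n)
   a (vn n') * walshd R (vn n) g * (((2 ^ k)%:R) ^+ d * (n' == n)%:R)).
  apply: eq_bigr => n' _; rewrite exchange_big /=; apply: eq_bigr => n _.
  by rewrite -mulr_sumr orthd.
rewrite exchange_big /= mulr_sumr; apply: eq_bigr => n hn.
rewrite (bigD1 n) //= big1 ?addr0; first by rewrite eqxx mulr1 mulrC.
by move=> n'' hn''; rewrite (negbTE hn'') mulr0 mulr0.
Qed.

Lemma Dprod (R : comNzRingType) d k (N : 'I_d -> nat) (m : {ffun 'I_d -> 'I_(2 ^ k)}) (g : dyadicd d) :
  (forall l, (N l <= 2 ^ k)%N) ->
  \sum_(n : {ffun 'I_d -> 'I_(2 ^ k)} | [forall l, (n l < N l)%N])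
     walshd R (vn n) (cpt k m) * walshd R (vn n) g =
  \prod_l \sum_(j < N l) walsh R j (pt k (m l)) * walsh R j (g l).
Proof.
move=> hN.
pose G := fun l (j : 'I_(2 ^ k)) => if (j < N l)%N then walsh R j (pt k (m l)) * walsh R j (g l) else 0.
transitivity (\prod_l \sum_(j : 'I_(2 ^ k)) G l j); last first.
  apply: eq_bigr => l _; rewrite (big_ord_widen (2 ^ k) (fun j => walsh R j (pt k (m l)) * walsh R j (g l)) (hN l)) [RHS]big_mkcond.
  by apply: eq_bigr.
rewrite (bigA_distr_bigA G) /G big_mkcond /=; apply: eq_bigr => n _.
rewrite prod_if; case: ifP => // _.
by rewrite /walshd -big_split.
Qed.

Lemma psum_norm (R : nzRingType) d k (a : ('I_d -> nat) -> R) (N : 'I_d -> nat) g :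
  (0 < d)%N -> (forall l, (0 < N l)%N) -> (forall l, (N l <= 2 ^ k)%N) ->
  psum a N g = \sum_(n : {ffun 'I_d -> 'I_(2 ^ k)} | [forall l, (n l < N l)%N])
     a (vn n) * walshd R (vn n) g.
Proof.
move=> hd hN0 hN.
have hC : (\max_(l < d) N l <= 2 ^ k)%N by apply/bigmax_leqP => l _; exact: hN.
have hNC : forall l, (N l <= \max_(l < d) N l)%N by move=> l; exact: (leq_bigmax l).
rewrite /psum.
move: hC hNC; case e : (\max_(l < d) N l) => [|C] hC hNC.
  by have := hNC (Ordinal hd); have := hN0 (Ordinal hd); lia.
pose h := fun (j : {ffun 'I_d -> 'I_C.+1}) => [ffun l => widen_ord hC (j l)].
pose h' := fun (i : {ffun 'I_d -> 'I_(2 ^ k)}) => [ffun l => (inord (i l) : 'I_C.+1)].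
rewrite (reindex_onto h h'); last first.
  move=> i /forallP hi; apply/ffunP => l; apply: val_inj.
  rewrite !ffunE /= inordK //; exact: leq_trans (hi l) (hNC l).
apply: eq_big.
  move=> j; rewrite /h /h'.
  have -> : [ffun l => (inord ([ffun l0 => widen_ord hC (j l0)] l) : 'I_C.+1)] == j.
    by apply/eqP/ffunP => l; apply: val_inj; rewrite !ffunE /= inord_val.
  rewrite andbT; apply: eq_forallb => l; by rewrite ffunE.
move=> j _.
have -> : vn (h j) = (fun l => nat_of_ord (j l)).
  by apply: functional_extensionality => l; rewrite /vn /h ffunE.
by [].
Qed.

Theorem proposition3 (R : realFieldType) (d : nat) (hd : (2 <= d)%N)
    (a : ('I_d -> nat) -> R) (w : nat) (mw : 'I_d -> nat)
    (hmw : forall l, (mw l < 2 ^ w)%N)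
    (htau : forall (k : nat) (m : 'I_d -> nat),
        (forall l, (m l < 2 ^ k)%N) ->
        (forall g : dyadicd d, in_cube k m g -> in_cube w mw g) ->
        tau a k m = 0) :
  forall (g : dyadicd d), in_cube w mw g ->
  forall (M : 'I_d -> nat), (forall l, (0 < M l)%N) ->
    psum a (fun l => 2 ^ w * M l)%N g = 0.
Proof.
move=> g hg M hM.
have hd0 : (0 < d)%N by apply: leq_trans hd.
set K := (\max_(l < d) M l).
set k := (w + K)%N.
have hN : forall l, (2 ^ w * M l <= 2 ^ k)%N.
  move=> l; rewrite /k expnD leq_mul2l; apply/orP; right.
  apply: leq_trans (leq_bigmax l) _; exact: ltnW (ltn_expl _ _).
have hB : ((2 ^ k)%:R ^+ d : R) != 0 by rewrite expf_eq0 pnatr_eq0 expn_eq0 andbF.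
rewrite (psum_norm (k := k)) //; last by move=> l; rewrite muln_gt0 expn_gt0 hM.
apply: (mulfI hB); rewrite mulr0 decomp; apply: big1 => m _.
case: (boolP [forall l : 'I_d, forall t : 'I_w, bit (m l) (k - 1 - t) == bit (mw l) (w - 1 - t)]).
  move=> /forallP hm.
  have ht := htau k (vn m) (fun l => ltn_ord (m l)).
  have : tau a k (vn m) = 0.
    apply: ht => g' hg' l t htw.
    rewrite (hg' l t); last by rewrite /k; lia.
    by have := hm l => /forallP /(_ (Ordinal htw)) /eqP.
  rewrite /tau (psum_norm (k := k)) //; last by move=> l; rewrite expn_gt0.
  move/eqP; rewrite mulf_eq0 invr_eq0 pnatr_eq0 expn_eq0 /= => /eqP h0.
  suff -> : \sum_(n' : {ffun 'I_d -> 'I_(2 ^ k)}) a (vn n') * walshd R (vn n') (cpt k m) = 0 by rewrite mul0r.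
  apply: etrans h0; apply: eq_bigl => n; apply/esym/forallP => l; exact: ltn_ord.
move=> /forallPn [l /forallPn [t ht]].
rewrite Dprod // (bigD1 l) //= (@E1 _ w _ _ t) ?mul0r ?mulr0 //.
rewrite /pt; have -> : (t < k)%N by rewrite /k; have := ltn_ord t; lia.
by rewrite (hg l t (ltn_ord t)).
Qed.
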